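(* For every class $K$ of algebras of type $\tau$, $$H\mathbf Q(K)=\mathbf S\mathbf P_r\mathbf D(K_0),$$ where $K_0$ is $K$ together with a trivial (one-element) algebra of type $\tau$.
   Context: A hypersubstitution $\sigma$ of type $\tau$ assigns to each $n$-ary operation symbol an $n$-ary term of type $\tau$, extended to all terms; the derived algebra $\mathbf A^\sigma$ replaces each fundamental operation $f_\gamma$ of $\mathbf A$ by $\sigma(f_\gamma)^{\mathbf A}$, and $\mathbf D(K)$ is the class of all derived algebras of members of $K$. A hyper-quasi-identity $\bigwedge_{i<n}(t_i=s_i)\to(t_n=s_n)$ is hypersatisfied in $\mathbf A$ if for every hypersubstitution $\sigma$ the quasi-identity $\bigwedge_{i<n}(\sigma(t_i)=\sigma(s_i))\to(\sigma(t_n)=\sigma(s_n))$ holds in $\mathbf A$. $H\mathbf Q(K)$ is the class of all algebras of type $\tau$ hypersatisfying every hyper-quasi-identity hypersatisfied in all members of $K$. $\mathbf S$ denotes closure under isomorphic copies of subalgebras and $\mathbf P_r$ closure under isomorphic copies of reduced (filtered) products $\prod_{i\in I}\mathbf A_i/F$, $F$ a filter on $I$. *)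

(* Defs.v *)
From mathcomp Require Import all_boot.
From Stdlib Require List.
Set Implicit Arguments. Unset Strict Implicit. Unset Printing Implicit Defensive.

Section UA.
Variables (F : Type) (ar : F -> nat).

Inductive term (V : Type) : Type :=
| Var : V -> term V
| App : forall f : F, ('I_(ar f) -> term V) -> term V.
Arguments Var {V}. Arguments App {V}.

Record algebra := Algebra {
  carrier :> Type;
  ops : forall f : F, ('I_(ar f) -> carrier) -> carrier }.
Arguments ops : clear implicits.

Fixpoint eval (A : algebra) (V : Type) (v : V -> carrier A) (t : term V) : carrier A :=
  match t with
  | Var x => v x
  | App f ts => ops A f (fun i => eval v (ts i))
  end.

Fixpoint subst (V W : Type) (s : V -> term W) (t : term V) : term W :=
  match t with
  | Var x => s x
  | App f ts => App f (fun i => subst s (ts i))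
  end.

(* A hypersubstitution assigns to each n-ary symbol an n-ary term,
   i.e. a term in the variables x_0, ..., x_{n-1}. *)
Definition hypersubst := forall f : F, term 'I_(ar f).

Fixpoint hyp (sigma : hypersubst) (V : Type) (t : term V) : term V :=
  match t with
  | Var x => Var x
  | App f ts => subst (fun i => hyp sigma (ts i)) (sigma f)
  end.

Definition derived (A : algebra) (sigma : hypersubst) : algebra :=
  @Algebra (carrier A) (fun f args => eval args (sigma f)).

Record quasi_identity := QI {
  qi_prem : seq (term nat * term nat);
  qi_concl : term nat * term nat }.

Definition qi_holds (A : algebra) (q : quasi_identity) : Prop :=
  forall v : nat -> carrier A,
    (forall p, List.In p (qi_prem q) -> eval v p.1 = eval v p.2) ->
    eval v (qi_concl q).1 = eval v (qi_concl q).2.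

Definition qi_hyp (sigma : hypersubst) (q : quasi_identity) : quasi_identity :=
  QI [seq (hyp sigma p.1, hyp sigma p.2) | p <- qi_prem q]
     (hyp sigma (qi_concl q).1, hyp sigma (qi_concl q).2).

Definition hypersatisfies (A : algebra) (q : quasi_identity) : Prop :=
  forall sigma : hypersubst, qi_holds A (qi_hyp sigma q).

Definition class := algebra -> Prop.

Definition HQ (K : class) : class := fun A =>
  forall q : quasi_identity,
    (forall B, K B -> hypersatisfies B q) -> hypersatisfies A q.

Definition Dcl (K : class) : class := fun A =>
  exists (B : algebra) (sigma : hypersubst), K B /\ A = derived B sigma.

Definition is_hom (A B : algebra) (h : carrier A -> carrier B) : Prop :=
  forall (f : F) (args : 'I_(ar f) -> carrier A),
    h (ops A f args) = ops B f (fun i => h (args i)).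

(* S(K): isomorphic copies of subalgebras of members of K, i.e.
   algebras embeddable (injective homomorphism) into a member of K. *)
Definition Scl (K : class) : class := fun A =>
  exists (B : algebra) (h : carrier A -> carrier B),
    K B /\ @is_hom A B h /\ injective h.

Definition is_filter (I : Type) (Fl : (I -> Prop) -> Prop) : Prop :=
  [/\ Fl (fun _ => True),
      (forall X Y : I -> Prop, Fl X -> (forall i, X i -> Y i) -> Fl Y)
    & (forall X Y : I -> Prop, Fl X -> Fl Y -> Fl (fun i => X i /\ Y i))].

Definition prod_ops (I : Type) (Ai : I -> algebra) (f : F)
  (args : 'I_(ar f) -> forall i, carrier (Ai i)) : forall i, carrier (Ai i) :=
  fun i => ops (Ai i) f (fun k => args k i).

(* P_r(K): isomorphic copies of reduced products prod_i A_i / Fl.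
   A is such a copy iff there is a surjective map h from prod_i A_i onto A,
   compatible with the operations, whose kernel is exactly the
   congruence  x ~ y  <=>  {i | x i = y i} \in Fl. *)
Definition Prcl (K : class) : class := fun A =>
  exists (I : Type) (Fl : (I -> Prop) -> Prop) (Ai : I -> algebra)
         (h : (forall i, carrier (Ai i)) -> carrier A),
    [/\ is_filter Fl,
        (forall i, K (Ai i)),
        (forall f args, h (@prod_ops I Ai f args) = ops A f (fun k => h (args k))),
        (forall a : carrier A, exists x, h x = a)
      & (forall x y, h x = h y <-> Fl (fun i => x i = y i))].

Definition trivial_alg (A : algebra) : Prop :=
  exists a : carrier A, forall b : carrier A, b = a.

Definition K0 (K : class) : class := fun A => K A \/ trivial_alg A.

End UA.

(* Main.v *)
Require Import Defs.
From mathcomp Require Import all_boot.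
From Stdlib Require Import Classical ClassicalEpsilon FunctionalExtensionality ProofIrrelevance PropExtensionality.
From Stdlib Require List.
Set Implicit Arguments. Unset Strict Implicit. Unset Printing Implicit Defensive.

Section Proof.
Variables (F : Type) (ar : F -> nat).

Lemma eval_subst (A : algebra ar) V W (v : W -> A) (s : V -> term ar W) (t : term ar V) :
  eval v (subst s t) = eval (fun x => eval v (s x)) t.
Proof.
elim: t => [x|f ts IH] //=. congr (@ops _ _ A f _). apply: functional_extensionality => i. exact: IH.
Qed.

Lemma subst_subst V W U (s : V -> term ar W) (r : W -> term ar U) (t : term ar V) :
  subst r (subst s t) = subst (fun x => subst r (s x)) t.
Proof.
elim: t => [x|f ts IH] //=. congr (@App _ _ _ f _). apply: functional_extensionality => i. exact: IH.
Qed.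

Lemma hyp_subst (tau : hypersubst ar) V W (s : V -> term ar W) (t : term ar V) :
  hyp tau (subst s t) = subst (fun x => hyp tau (s x)) (hyp tau t).
Proof.
elim: t => [x|f ts IH] //=. rewrite subst_subst. congr (subst _ _).
apply: functional_extensionality => i. exact: IH.
Qed.

Definition hcomp (tau sigma : hypersubst ar) : hypersubst ar := fun f => hyp tau (sigma f).

Lemma hyp_hyp tau sigma V (t : term ar V) : hyp tau (hyp sigma t) = hyp (hcomp tau sigma) t.
Proof.
elim: t => [x|f ts IH] //=. rewrite hyp_subst /hcomp. congr (subst _ _).
apply: functional_extensionality => i. exact: IH.
Qed.

Lemma eval_derived (B : algebra ar) tau V (v : V -> B) (t : term ar V) :
  @eval _ _ (derived B tau) V v t = eval v (hyp tau t).
Proof.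
elim: t => [x|f ts IH] //=. rewrite eval_subst /=. congr (eval _ _).
apply: functional_extensionality => i. exact: IH.
Qed.

Definition hid : hypersubst ar := fun f => @App _ _ _ f (fun k => Var ar k).

Lemma hyp_id V (t : term ar V) : hyp hid t = t.
Proof.
elim: t => [x|f ts IH] //=. congr (@App _ _ _ f _). apply: functional_extensionality => i. exact: IH.
Qed.

Lemma eval_hom (A B : algebra ar) (h : A -> B) V (v : V -> A) t :
  is_hom h -> h (eval v t) = eval (fun x => h (v x)) t.
Proof.
move=> hh; elim: t => [x|f ts IH] //=. rewrite hh. congr (@ops _ _ B f _).
apply: functional_extensionality => i. exact: IH.
Qed.

Definition prodA (I : Type) (Ai : I -> algebra ar) : algebra ar :=
  @Algebra _ ar (forall i, Ai i) (@prod_ops _ _ I Ai).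

Lemma eval_prod I (Ai : I -> algebra ar) V (v : V -> prodA Ai) t i :
  (eval v t : prodA Ai) i = eval (fun x => v x i) t.
Proof.
elim: t => [x|f ts IH] //=. rewrite /prod_ops. congr (@ops _ _ (Ai i) f _).
apply: functional_extensionality => k. exact: IH.
Qed.

Lemma filter_seq I (Fl : (I -> Prop) -> Prop) (T : Type) (s : seq T) (X : T -> I -> Prop) :
  is_filter Fl -> (forall p, List.In p s -> Fl (X p)) ->
  Fl (fun i => forall p, List.In p s -> X p i).
Proof.
case=> FT Fup FI; elim: s => [|p s IH] H.
  by apply: (Fup _ _ FT) => i _ p [].
apply: (Fup (fun i => X p i /\ (forall p, List.In p s -> X p i))).
  apply: FI; first by apply: H; left.
  by apply: IH => q Hq; apply: H; right.
by move=> i [H1 H2] q [<-|Hq] //; apply: H2.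
Qed.

Lemma in_map_inv (T U : Type) (g : T -> U) (s : seq T) (y : U) :
  List.In y (map g s) -> exists x, List.In x s /\ y = g x.
Proof.
elim: s => [|x s IH] //= [<-|H]; first by exists x; split => //; left.
by case: (IH H) => z [Hz ->]; exists z; split => //; right.
Qed.

Lemma in_map (T U : Type) (g : T -> U) (s : seq T) (x : T) :
  List.In x s -> List.In (g x) (map g s).
Proof. by elim: s => [|y s IH] //= [->|H]; [left|right; apply: IH]. Qed.

Lemma D_hyp (K : algebra ar -> Prop) q (A : algebra ar) :
  (forall B, K B -> hypersatisfies B q) -> Dcl (K0 K) A -> hypersatisfies A q.
Proof.
move=> HK [B [tau [[KB|[a0 Ha0]] ->]]] sigma v Hp.
- have := HK B KB (hcomp tau sigma) v.
  rewrite /qi_hyp /= !eval_derived !hyp_hyp; apply => p Hp1.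
  case: (in_map_inv Hp1) => p0 [Hp0 ->] /=.
  have := Hp _ (in_map (fun p => (hyp sigma p.1, hyp sigma p.2)) Hp0).
  by rewrite /= !eval_derived !hyp_hyp.
- by rewrite /= [LHS]Ha0 [RHS]Ha0.
Qed.

Lemma Pr_hyp (L : algebra ar -> Prop) q (A : algebra ar) :
  (forall B, L B -> hypersatisfies B q) -> Prcl L A -> hypersatisfies A q.
Proof.
move=> HL [I [Fl [Ai [h [Hf HLi Hh Hs Hk]]]]] sigma v Hp.
have hh : @is_hom _ _ (prodA Ai) A h by move=> f args; exact: Hh.
have [x Hx] : exists x : nat -> prodA Ai, forall n, h (x n) = v n.
  exists (fun n => proj1_sig (constructive_indefinite_description _ (Hs (v n)))).
  by move=> n; case: constructive_indefinite_description.
have ev : forall t, eval v t = h (eval x t).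
  move=> t; rewrite (eval_hom _ _ hh); congr (eval _ _).
  by apply: functional_extensionality => n; rewrite Hx.
rewrite !ev; apply/Hk.
case: (Hf) => _ Fup _.
set P := fun (p : term ar nat * term ar nat) i =>
  eval (fun n => x n i) p.1 = eval (fun n => x n i) p.2.
have H1 : Fl (fun i => forall p, List.In p (qi_prem (qi_hyp sigma q)) -> P p i).
  apply: filter_seq => // p Hp0; have := Hp p Hp0; rewrite !ev => /Hk.
  move=> HF; apply: (Fup _ _ HF) => i; by rewrite !eval_prod.
apply: (Fup _ _ H1) => i Hi; rewrite !eval_prod.
exact: (HL _ (HLi i) sigma (fun n => x n i)).
Qed.

Lemma S_hyp (L : algebra ar -> Prop) q (A : algebra ar) :
  (forall B, L B -> hypersatisfies B q) -> Scl L A -> hypersatisfies A q.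
Proof.
move=> HL [B [h [LB [hh hi]]]] sigma v Hp; apply: hi.
rewrite !(eval_hom _ _ hh); apply: (HL _ LB sigma) => p Hp0.
by rewrite -!(eval_hom _ _ hh) (Hp p Hp0).
Qed.

Lemma sig_eq T (P : T -> Prop) (a b : {x | P x}) : proj1_sig a = proj1_sig b -> a = b.
Proof. case: a => x px; case: b => y py /= exy; subst y; f_equal; apply: proof_irrelevance. Qed.

Lemma In_mem (T : eqType) (x : T) (s : seq T) : x \in s -> List.In x s.
Proof.
elim: s => [|y s IH] //; rewrite in_cons => /orP [/eqP ->|H]; first by left.
by right; apply: IH.
Qed.

Lemma In_enum n (k : 'I_n) : List.In k (enum 'I_n).
Proof. by apply: In_mem; rewrite mem_enum. Qed.

Lemma quotient_exists I (Fl : (I -> Prop) -> Prop) (Ai : I -> algebra ar) : is_filter Fl ->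
  exists (Q : algebra ar) (h : (forall i, Ai i) -> Q),
    [/\ (forall f args, h (@prod_ops _ _ I Ai f args) = @ops _ _ Q f (fun k => h (args k))),
        (forall a : Q, exists x, h x = a)
      & (forall x y, h x = h y <-> Fl (fun i => x i = y i))].
Proof.
move=> Hf; case: (Hf) => FT Fup FI.
pose R (x y : forall i, Ai i) := Fl (fun i => x i = y i).
have Rrefl : forall x, R x x by move=> x; apply: (Fup _ _ FT).
have Rsym : forall x y, R x y -> R y x by move=> x y H; apply: (Fup _ _ H).
have Rtrans : forall x y z, R x y -> R y z -> R x z.
  by move=> x y z H1 H2; apply: (Fup _ _ (FI _ _ H1 H2)) => i [-> ->].
pose Qc := {P : (forall i, Ai i) -> Prop | exists x, P = R x}.
pose hq (x : forall i, Ai i) : Qc := exist _ (R x) (ex_intro _ x erefl).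
pose rep (c : Qc) := proj1_sig (constructive_indefinite_description _ (proj2_sig c)).
have repP : forall c, proj1_sig c = R (rep c).
  by move=> c; rewrite /rep; case: constructive_indefinite_description.
have ker : forall x y, hq x = hq y <-> R x y.
  move=> x y; split.
    by move=> /(congr1 (@proj1_sig _ _)) /= ->.
  move=> Hxy; apply: sig_eq => /=; apply: functional_extensionality => z.
  apply: propositional_extensionality; split => H.
    exact: (Rtrans _ _ _ (Rsym _ _ Hxy) H).
  exact: (Rtrans _ _ _ Hxy H).
have hrep : forall c, hq (rep c) = c by move=> c; apply: sig_eq => /=; rewrite repP.
pose opsQ (f : F) (args : 'I_(ar f) -> Qc) : Qc := hq (@prod_ops _ _ I Ai f (fun k => rep (args k))).
exists (@Algebra _ ar Qc opsQ), hq; split => //.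
- move=> f args /=; rewrite /opsQ; apply/ker.
  have H : forall k, R (args k) (rep (hq (args k))).
    by move=> k; apply/ker; rewrite hrep.
  have := filter_seq (s := enum 'I_(ar f)) (X := fun k i => args k i = rep (hq (args k)) i) Hf.
  move=> /(_ (fun k _ => H k)) HF; apply: (Fup _ _ HF) => i Hi.
  rewrite /prod_ops; congr (@ops _ _ (Ai i) f _); apply: functional_extensionality => k.
  exact: Hi _ (In_enum k).
- by move=> a; exists (rep a); apply: hrep.
Qed.

Section Main.
Variables (K : algebra ar -> Prop) (A : algebra ar) (HA : HQ K A).

Definition dec (x y : carrier A) : {x = y} + {x <> y} := excluded_middle_informative (x = y).

Fixpoint idx (l : list (carrier A)) (e : carrier A) : nat :=
  match l with nil => 0 | y :: l' => if dec e y then 0 else (idx l' e).+1 end.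

Lemma idx_nth l e d : List.In e l -> List.nth (idx l e) l d = e.
Proof.
elim: l => [|y l IH] //= H; case: (dec e y) => [ey|ne] /=; first by rewrite ey.
apply: IH; case: H => // ey; by case: ne.
Qed.

Definition fact := {f : F & 'I_(ar f) -> carrier A}.

Definition elems (p : fact) : list (carrier A) :=
  let: existT f args := p in @ops _ _ A f args :: List.map args (enum 'I_(ar f)).

Definition Lmk (Phi : seq fact) (a b : carrier A) : list (carrier A) :=
  a :: b :: List.flat_map elems Phi.

Definition tm (L : list (carrier A)) (p : fact) : term ar nat * term ar nat :=
  let: existT f args := p in
  (@App _ _ _ f (fun k => Var ar (idx L (args k))), Var ar (idx L (@ops _ _ A f args))).

Definition qq (Phi : seq fact) (a b : carrier A) : quasi_identity ar :=
  QI (List.map (tm (Lmk Phi a b)) Phi) (Var ar (idx (Lmk Phi a b) a), Var ar (idx (Lmk Phi a b) b)).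

Lemma In_L_ops Phi a b f args : List.In (existT _ f args) Phi ->
  List.In (@ops _ _ A f args) (Lmk Phi a b).
Proof.
move=> H; right; right; apply/List.in_flat_map; exists (existT _ f args); split => //; by left.
Qed.

Lemma In_L_args Phi a b f args k : List.In (existT _ f args) Phi ->
  List.In (args k) (Lmk Phi a b).
Proof.
move=> H; right; right; apply/List.in_flat_map; exists (existT _ f args); split => //; right.
by apply: List.in_map; apply: In_enum.
Qed.

Lemma A_fails Phi a b : a <> b -> ~ hypersatisfies A (qq Phi a b).
Proof.
move=> neq H; apply: neq.
set L := Lmk Phi a b.
have Hq := H hid (fun n => List.nth n L a).
have e1 : List.nth (idx L a) L a = a by apply: idx_nth; left.
have e2 : List.nth (idx L b) L a = b by apply: idx_nth; right; left.
apply: (etrans (esym e1)); apply: (etrans _ e2); apply: Hq.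
move=> p Hp; case: (in_map_inv Hp) => p0 [Hp0 ->]; rewrite !hyp_id.
case/List.in_map_iff: Hp0 => [[f args] [<- Hin]].
change (@ops _ _ A f (fun k => List.nth (idx L (args k)) L a) =
  List.nth (idx L (@ops _ _ A f args)) L a).
rewrite idx_nth; last exact: In_L_ops.
congr (@ops _ _ A f _); apply: functional_extensionality => k.
by rewrite idx_nth //; apply: In_L_args.
Qed.

Definition Wit := {B : algebra ar & (hypersubst ar * (nat -> carrier B))%type}.

Definition wit_ok (q : quasi_identity ar) (t : Wit) : Prop :=
  let D := derived (projT1 t) (projT2 t).1 in
  let w := (projT2 t).2 : nat -> carrier D in
  [/\ K (projT1 t),
      (forall p, List.In p (qi_prem q) -> eval w p.1 = eval w p.2)
    & eval w (qi_concl q).1 <> eval w (qi_concl q).2].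

Lemma exists_fail Phi a b : a <> b -> exists t : Wit, wit_ok (qq Phi a b) t.
Proof.
move=> neq; apply: NNPP => Hn; apply: (A_fails neq); apply: HA => B KB sigma w Hp.
apply: NNPP => Hc; apply: Hn; exists (existT _ B (sigma, w)); split => //=.
- move=> p Hp0; rewrite !eval_derived; apply: (Hp (hyp sigma p.1, hyp sigma p.2)).
  exact: (in_map (fun p => (hyp sigma p.1, hyp sigma p.2)) Hp0).
- by move=> Hc2; apply: Hc; move: Hc2 => /=.
Qed.

Definition Idx := {t : seq fact * carrier A * carrier A | t.1.2 <> t.2}.

Definition qi (i : Idx) := qq (proj1_sig i).1.1 (proj1_sig i).1.2 (proj1_sig i).2.

Definition wit (i : Idx) : Wit :=
  proj1_sig (constructive_indefinite_description _ (exists_fail (proj1_sig i).1.1 (proj2_sig i))).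

Lemma witP i : wit_ok (qi i) (wit i).
Proof. by rewrite /wit; case: constructive_indefinite_description. Qed.

Definition Di (i : Idx) := derived (projT1 (wit i)) (projT2 (wit i)).1.
Definition wi (i : Idx) : nat -> carrier (Di i) := (projT2 (wit i)).2.
Definition Li (i : Idx) := Lmk (proj1_sig i).1.1 (proj1_sig i).1.2 (proj1_sig i).2.
Definition xa (a : carrier A) : forall i, carrier (Di i) := fun i => wi i (idx (Li i) a).

Definition Fl (X : Idx -> Prop) : Prop :=
  exists Phi0 : seq fact, forall i, (forall p, List.In p Phi0 -> List.In p (proj1_sig i).1.1) -> X i.

Lemma Fl_filter : is_filter Fl.
Proof.
split.
- by exists nil.
- by move=> X Y [P0 H] HXY; exists P0 => i Hi; apply: HXY; apply: H.
- move=> X Y [P0 H0] [P1 H1]; exists (P0 ++ P1)%list => i Hi; split.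
    by apply: H0 => p Hp; apply: Hi; apply: List.in_or_app; left.
  by apply: H1 => p Hp; apply: Hi; apply: List.in_or_app; right.
Qed.

Lemma main_sub : Scl (Prcl (Dcl (K0 K))) A.
Proof.
case: (quotient_exists Di Fl_filter) => Q [h [Hh Hs Hk]].
exists Q, (fun a => h (xa a)); split; [|split].
- exists Idx, Fl, Di, h; split => //; first exact: Fl_filter.
  move=> i; exists (projT1 (wit i)), (projT2 (wit i)).1; split => //; left.
  by case: (witP i).
- move=> f args; rewrite -Hh; apply/Hk.
  exists [:: existT _ f args] => i Hi.
  have Hin := Hi _ (or_introl erefl).
  case: (witP i) => _ Hp _.
  have := Hp (tm (Li i) (existT _ f args)) (List.in_map _ _ _ Hin).
  by move=> Hx; exact: (esym Hx).
- move=> a b /Hk [Phi0 H]; apply: NNPP => neq.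
  pose i0 : Idx := exist _ (Phi0, a, b) neq.
  have := H i0 (fun p Hp => Hp).
  by case: (witP i0).
Qed.

End Main.

End Proof.

Theorem theorem5p6 (F : Type) (ar : F -> nat) (K : algebra ar -> Prop) :
  forall A : algebra ar, HQ K A <-> Scl (Prcl (Dcl (K0 K))) A.
Proof.
move=> A; split; first exact: main_sub.
move=> HA q HK; apply: (S_hyp _ HA) => B HB; apply: (Pr_hyp _ HB) => C HC.
exact: D_hyp HK HC.
Qed.
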